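(* Let $n$ be even and $f,g:\mathbb{F}_2^n\to\mathbb{F}_2$ bent functions with $g(\mathbf{x})=f(\mathbf{x}\oplus\mathbf{b})\oplus\mathbf{c}\cdot\mathbf{x}\oplus d$ for all $\mathbf{x}$, where $\mathbf{b},\mathbf{c}\in\mathbb{F}_2^n$, $d\in\mathbb{F}_2$. Let $\tilde f$ be the dual of $f$. Starting from $\ket{0^n}$ and applying in order $\mathrm{H}^{\otimes n}$, $U_g$, $\mathrm{H}^{\otimes n}$, $U_{\tilde f}$, $\mathrm{H}^{\otimes n}$, the state before measurement is $$(-1)^{\mathbf{b}\cdot\mathbf{c}\oplus d}\,2^{-n}\sum_{\mathbf{y},\mathbf{z}\in\mathbb{F}_2^n}(-1)^{\tilde f(\mathbf{y}\oplus\mathbf{c})\oplus\tilde f(\mathbf{y})\oplus\mathbf{y}\cdot(\mathbf{z}\oplus\mathbf{b})}\ket{\mathbf{z}},$$ and the probability of observing $\mathbf{z}\in\mathbb{F}_2^n$ upon measurement is $2^{-2n}\left|\sum_{\mathbf{y}\in\mathbb{F}_2^n}(-1)^{\tilde f(\mathbf{y}\oplus\mathbf{c})\oplus\tilde f(\mathbf{y})\oplus\mathbf{y}\cdot(\mathbf{z}\oplus\mathbf{b})}\right|^2$.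
   Context: $\mathbf{x}\cdot\mathbf{y}=\bigoplus_ix_iy_i$. Walsh–Hadamard transform: $W_f(\boldsymbol{\omega})=2^{-n/2}\sum_{\mathbf{x}}(-1)^{f(\mathbf{x})\oplus\mathbf{x}\cdot\boldsymbol{\omega}}$. $f$ is bent if $W_f(\boldsymbol{\omega})=\pm1$ for all $\boldsymbol{\omega}$; its dual $\tilde f$ is the Boolean function with $(-1)^{\tilde f(\mathbf{x})}=W_f(\mathbf{x})$. $\mathrm{H}$ is the Hadamard gate and $U_h$ the phase oracle $\ket{\mathbf{x}}\mapsto(-1)^{h(\mathbf{x})}\ket{\mathbf{x}}$. *)

(* Defs.v *)
(* Amplitudes live in an arbitrary numClosedFieldType C
   (e.g. algC, or complex numbers). *)
From mathcomp Require Import all_boot all_order all_algebra.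
Set Implicit Arguments. Unset Strict Implicit. Unset Printing Implicit Defensive.
Import Order.TTheory GRing.Theory Num.Theory.
Local Open Scope ring_scope.

Definition bvec (n : nat) := {ffun 'I_n -> bool}.
Definition xorv n (x y : bvec n) : bvec n := [ffun i => x i (+) y i].
Definition zerov n : bvec n := [ffun _ => false].
Definition dotv n (x y : bvec n) : bool := \big[addb/false]_(i < n) (x i && y i).

Section Q.
Variable C : numClosedFieldType.
Definition sgn (b : bool) : C := (-1) ^+ b.
Definition isq2n (n : nat) : C := (sqrtC 2)^-1 ^+ n.

Definition walsh n (f : bvec n -> bool) (w : bvec n) : C :=
  isq2n n * \sum_(x : bvec n) sgn (f x (+) dotv x w).
Definition bent n (f : bvec n -> bool) : Prop :=
  forall w, walsh f w = 1 \/ walsh f w = -1.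
Definition is_dual n (f ft : bvec n -> bool) : Prop :=
  forall x, sgn (ft x) = walsh f x.

Definition state n := bvec n -> C.
Definition ket0 n : state n := fun z => (z == zerov n)%:R.
Definition hadamard_n n (psi : state n) : state n :=
  fun z => isq2n n * \sum_(x : bvec n) sgn (dotv x z) * psi x.
Definition phase_oracle n (h : bvec n -> bool) (psi : state n) : state n :=
  fun x => sgn (h x) * psi x.
Definition prob n (psi : state n) (z : bvec n) : C := `|psi z| ^+ 2.
End Q.

(* Main.v *)
Require Import Defs.
From mathcomp Require Import all_boot all_order all_algebra.
From mathcomp Require Import ring.
Import Order.TTheory GRing.Theory Num.Theory.
Local Open Scope ring_scope.

Lemma sgnD (C : numClosedFieldType) a b : sgn C (a (+) b) = sgn C a * sgn C b.
Proof. by case: a; case: b; rewrite /sgn /= ?expr0 ?expr1 ?mulr1 ?mul1r ?mulrNN ?mulr1. Qed.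

Lemma dotv_xorl n (x y z : bvec n) : dotv (xorv x y) z = dotv x z (+) dotv y z.
Proof.
rewrite /dotv -big_split /=; apply: eq_bigr => i _; rewrite ffunE.
by case: (x i); case: (y i); case: (z i).
Qed.

Lemma dotvC n (x y : bvec n) : dotv x y = dotv y x.
Proof. by apply: eq_bigr => i _; rewrite andbC. Qed.

Lemma dotv_xorr n (x y z : bvec n) : dotv z (xorv x y) = dotv z x (+) dotv z y.
Proof. by rewrite dotvC dotv_xorl !(@dotvC _ z). Qed.

Lemma dotv0 n (w : bvec n) : dotv (zerov n) w = false.
Proof. by rewrite /dotv big1 // => i _; rewrite ffunE. Qed.

Lemma xorvK n (b : bvec n) : involutive (fun x : bvec n => xorv x b).
Proof. by move=> x; apply/ffunP => i; rewrite !ffunE addbK. Qed.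

Lemma isq2nM (C : numClosedFieldType) n : isq2n C n * isq2n C n = 2 ^- n.
Proof.
rewrite /isq2n -exprMn -invrM ?unitfE ?sqrtC_eq0 ?pnatr_eq0 //.
by rewrite -expr2 sqrtCK exprVn.
Qed.

Theorem theorem11 (C : numClosedFieldType) (n : nat) (neven : ~~ odd n)
  (f g ft : bvec n -> bool) (b c : bvec n) (d : bool)
  (bf : bent C f) (bg : bent C g)
  (hg : forall x, g x = f (xorv x b) (+) dotv c x (+) d)
  (hft : is_dual C f ft) :
  let psi := hadamard_n (phase_oracle ft (hadamard_n (phase_oracle g
               (hadamard_n (@ket0 C n))))) in
  (forall z, psi z =
     sgn C (dotv b c (+) d) * 2 ^- n *
       \sum_(y : bvec n) sgn C (ft (xorv y c) (+) ft y (+) dotv y (xorv z b)))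
  /\
  (forall z, prob psi z =
     2 ^- (2 * n) *
       `|\sum_(y : bvec n) sgn C (ft (xorv y c) (+) ft y (+) dotv y (xorv z b))| ^+ 2).
Proof.
have H0 : forall w, hadamard_n (@ket0 C n) w = isq2n C n.
  move=> w; rewrite /hadamard_n (bigD1 (zerov n)) //= /ket0 eqxx dotv0.
  rewrite big1 ?addr0 ?mulr1 /sgn ?expr0 ?mulr1 // => x /negbTE ->.
  by rewrite mulr0.
have Wg : forall w, walsh C g w =
    sgn C (dotv b c (+) d) * sgn C (dotv w b) * sgn C (ft (xorv w c)).
  move=> w; rewrite hft /walsh (reindex_inj (inv_inj (@xorvK n b))) /=.
  rewrite !mulr_sumr; apply: eq_bigr => x _.
  rewrite hg (@xorvK n b) !dotv_xorr !dotv_xorl !sgnD (@dotvC n b c) (@dotvC n c x) (@dotvC n b w).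
  by rewrite /sgn; ring.
have psiE : forall z, hadamard_n (phase_oracle ft (hadamard_n (phase_oracle g
               (hadamard_n (@ket0 C n))))) z =
     sgn C (dotv b c (+) d) * 2 ^- n *
       \sum_(y : bvec n) sgn C (ft (xorv y c) (+) ft y (+) dotv y (xorv z b)).
  move=> z; rewrite -isq2nM /hadamard_n /phase_oracle !mulr_sumr.
  apply: eq_bigr => w _.
  have -> : isq2n C n * \sum_x sgn C (dotv x w) * (sgn C (g x) * hadamard_n (@ket0 C n) x)
      = isq2n C n * walsh C g w.
    rewrite /walsh; congr (_ * _); rewrite mulr_sumr; apply: eq_bigr => x _.
    by rewrite H0 sgnD; ring.
  rewrite Wg dotv_xorr (@dotvC n w z) !sgnD.
  ring.
move=> psi; split; first exact: psiE.
move=> z; rewrite /prob /psi psiE !normrM !exprMn.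
have -> : `|sgn C (dotv b c (+) d)| = 1 by case: (_ (+) _); rewrite /sgn ?expr1 ?normrN1 ?expr0 ?normr1.
rewrite expr1n mul1r ger0_norm ?invr_ge0 ?exprn_ge0 ?ler0n //.
by rewrite -exprVn -exprM mulnC exprVn.
Qed.
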